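(* Let $G$ be a looped simple graph and $S$ a subtransversal of $W(G)$. Then $S$ is a transverse circuit of $G$ if and only if there is a looped simple graph $H$ locally equivalent to $G$ and an induced isomorphism $\beta: M[IAS(G)]\to M[IAS(H)]$ such that $\beta(S)=\zeta_H(v)$ for some vertex $v\in V(H)$.
   Context: A looped simple graph is a finite graph in which each vertex carries at most one loop and no two distinct vertices are joined by more than one edge. ''Adjacent''/''neighbors'' refer only to distinct vertices joined by a non-loop edge; $N_G(v)$ is the set of neighbors of $v$ (never containing $v$), and the degree of $v$ is $|N_G(v)|$ (loops are not counted). $A(G)$ is the $V(G)\times V(G)$ matrix over $GF(2)$ with diagonal entry $1$ exactly at looped vertices and off-diagonal entry $1$ exactly for adjacent pairs. $IAS(G)=(I\mid A(G)\mid A(G)+I)$ over $GF(2)$, rows indexed by $V(G)$; for $v\in V(G)$ the $v$-columns of the three blocks are labelled $\phi_G(v),\chi_G(v),\psi_G(v)$. The isotropic matroid $M[IAS(G)]$ is the binary column matroid of $IAS(G)$ on the ground set $W(G)=\{\phi_G(v),\chi_G(v),\psi_G(v):v\in V(G)\}$. The vertex triple of $v$ is $\tau_G(v)=\{\phi_G(v),\chi_G(v),\psi_G(v)\}$. A subtransversal is a subset of $W(G)$ meeting each vertex triple in at most one element; a transversal meets each in exactly one. A transverse matroid of $G$ is the restriction of $M[IAS(G)]$ to a transversal; a transverse circuit of $G$ is a circuit of $M[IAS(G)]$ that is a subtransversal. Local equivalence: $G_\ell^v$ is obtained from $G$ by complementing the loop status of $v$; $G_s^v$ by complementing the adjacency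 status of every pair of distinct neighbors of $v$; $G_{ns}^v$ by doing this and also complementing the loop status of every neighbor of $v$. $H$ is locally equivalent to $G$ if $H$ is obtained from $G$ by a finite sequence of such operations (so $V(H)=V(G)$). Induced isomorphisms: for each such operation producing $G'$ from $G$ there is a matroid isomorphism $M[IAS(G)]\to M[IAS(G')]$ sending $\alpha_G(x)\mapsto\alpha_{G'}(x)$ for all $\alpha\in\{\phi,\chi,\psi\}$, $x\in V(G)$, except: for $G'=G_\ell^v$, $\chi_G(v)\mapsto\psi_{G'}(v)$ and $\psi_G(v)\mapsto\chi_{G'}(v)$; for $G'=G_{ns}^v$ with $v$ unlooped, $\phi_G(v)\mapsto\psi_{G'}(v)$, $\psi_G(v)\mapsto\phi_{G'}(v)$, and with $v$ looped, $\phi_G(v)\mapsto\chi_{G'}(v)$, $\chi_G(v)\mapsto\phi_{G'}(v)$; for $G'=G_s^v$, the same exchange at $v$ as for $G_{ns}^v$ and, in addition, for every $w\in N_G(v)$, $\chi_G(w)\mapsto\psi_{G'}(w)$ and $\psi_G(w)\mapsto\chi_{G'}(w)$. An induced isomorphism $M[IAS(G)]\to M[IAS(H)]$, for $H$ locally equivalent to $G$, is a composition of such isomorphisms along a sequence of operations transforming $G$ into $H$. Neighborhood circuit: $\zeta_G(v)=\{\chi_G(v)\}\cup\{\phi_G(w):w\in N_G(v)\}$ if $v$ is unlooped, and $\zeta_G(v)=\{\psi_G(v)\}\cup\{\phi_G(w):w\in N_G(v)\}$ if $v$ is looped. *)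

(* Defs.v *)
From HB Require Import structures.
From mathcomp Require Import all_boot.
Set Implicit Arguments. Unset Strict Implicit. Unset Printing Implicit Defensive.

Inductive lab := Phi | Chi | Psi.

Definition lab2o (a : lab) : 'I_3 :=
  match a with Phi => @Ordinal 3 0 isT | Chi => @Ordinal 3 1 isT | Psi => @Ordinal 3 2 isT end.
Definition o2lab (i : 'I_3) : lab :=
  match val i with 0 => Phi | 1 => Chi | _ => Psi end.
Lemma lab2oK : cancel lab2o o2lab. Proof. by case. Qed.
HB.instance Definition _ := Finite.copy lab (can_type lab2oK).

Section Graphs.
Variable V : finType.

(* A looped simple graph on the vertex set V is given by its adjacency matrix
   A(G) over GF(2) (booleans): G v w for v <> w is adjacency, G v v is the loop
   status of v. *)
Definition graph := V -> V -> bool.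

Definition looped_simple (G : graph) : Prop := forall v w, G v w = G w v.

Definition adj (G : graph) (v w : V) : bool := (v != w) && G v w.
Definition nbhd (G : graph) (v : V) : {set V} := [set w | adj G v w].

(* Ground set W(G): pairs (alpha, v), alpha in {phi,chi,psi}; the element
   (Phi,v) is phi_G(v), (Chi,v) is chi_G(v), (Psi,v) is psi_G(v). *)
Definition elt := (lab * V)%type.

(* column of IAS(G) = (I | A(G) | A(G)+I) labelled by an element *)
Definition col (G : graph) (x : elt) : V -> bool := fun w =>
  match x.1 with
  | Phi => w == x.2
  | Chi => G w x.2
  | Psi => G w x.2 (+) (w == x.2)
  end.

(* independence in the binary column matroid M[IAS(G)]: the columns are
   linearly independent over GF(2), i.e. no nonempty subset sums to zero *)
Definition indep (G : graph) (S : {set elt}) : Prop :=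
  forall T : {set elt}, T \subset S ->
    (forall w : V, \big[addb/false]_(x in T) col G x w = false) -> T = set0.

Definition circuit (G : graph) (C : {set elt}) : Prop :=
  ~ indep G C /\ forall D : {set elt}, D \proper C -> indep G D.

Definition subtransversal (S : {set elt}) : Prop :=
  forall x y, x \in S -> y \in S -> x.2 = y.2 -> x = y.

Definition transverse_circuit (G : graph) (S : {set elt}) : Prop :=
  subtransversal S /\ circuit G S.

Definition zeta (G : graph) (v : V) : {set elt} :=
  (if G v v then (Psi, v) else (Chi, v)) |: [set (Phi, w) | w in nbhd G v].

Definition op_loop (G : graph) (v : V) : graph := fun x y =>
  if (x == v) && (y == v) then ~~ G x y else G x y.
Definition op_s (G : graph) (v : V) : graph := fun x y =>
  if [&& x != y, adj G v x & adj G v y] then ~~ G x y else G x y.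
Definition op_ns (G : graph) (v : V) : graph := fun x y =>
  if adj G v x && adj G v y then ~~ G x y else G x y.

Definition swapl (a b c : lab) : lab :=
  if c == a then b else if c == b then a else c.

(* the isomorphisms induced by the local operations (relative to the graph
   G before the operation) *)
Definition map_loop (G : graph) (v : V) (x : elt) : elt :=
  if x.2 == v then (swapl Chi Psi x.1, x.2) else x.
Definition map_ns (G : graph) (v : V) (x : elt) : elt :=
  if x.2 == v then
    (if G v v then (swapl Phi Chi x.1, x.2) else (swapl Phi Psi x.1, x.2))
  else x.
Definition map_s (G : graph) (v : V) (x : elt) : elt :=
  if x.2 == v then map_ns G v x
  else if x.2 \in nbhd G v then (swapl Chi Psi x.1, x.2) else x.

(* induced_iso G H beta : H is obtained from G by a finite sequence of local
   operations and beta is the composition of the corresponding induced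
   isomorphisms M[IAS(G)] -> M[IAS(H)] (as a map on labels). *)
Inductive induced_iso (G : graph) : graph -> (elt -> elt) -> Prop :=
| ii_refl : induced_iso G G id
| ii_loop H b v : induced_iso G H b -> induced_iso G (op_loop H v) (map_loop H v \o b)
| ii_s H b v : induced_iso G H b -> induced_iso G (op_s H v) (map_s H v \o b)
| ii_ns H b v : induced_iso G H b -> induced_iso G (op_ns H v) (map_ns H v \o b).

End Graphs.

(* Main.v *)
Require Import Defs.
From HB Require Import structures.
From mathcomp Require Import all_boot.
Set Implicit Arguments. Unset Strict Implicit. Unset Printing Implicit Defensive.

Definition zsum (V : finType) (H : graph V) (T : {set elt V}) :=
  forall w, \big[addb/false]_(x in T) col H x w = false.

Lemma sum_eq (T : finType) (P : pred T) a :
  \big[addb/false]_(t | P t) (t == a) = P a.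
Proof.
case: (boolP (P a)) => Ha.
  rewrite (bigD1 a) //= eqxx big1 // => t /andP[_ /negbTE] //.
by rewrite big1 // => t Pt; case: eqP => // e; rewrite -e Pt in Ha.
Qed.

Lemma phi_free (V : finType) (H : graph V) (T : {set elt V}) :
  (forall t, t \in T -> t.1 = Phi) -> zsum H T -> T = set0.
Proof.
move=> Hph Hz; apply/eqP; rewrite -subset0; apply/subsetP => y yT.
case: y yT => l z yT; have := Hz z.
rewrite (eq_bigr (fun t => t == (Phi, z))).
  by rewrite sum_eq -(Hph _ yT) yT.
case=> a b tT; have /= ha := Hph _ tT; rewrite /col /= ha xpair_eqE /= eq_sym.
by [].
Qed.

Lemma sum_formula (V : finType) (H : graph V) (T : {set elt V}) l u :
  l != Phi -> (l, u) \in T -> (forall t, t \in T -> t != (l, u) -> t.1 = Phi) ->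
  forall w, \big[addb/false]_(t in T) col H t w = col H (l, u) w (+) ((Phi, w) \in T).
Proof.
move=> lP xT Ho w; rewrite (bigD1 (l, u)) //=; congr (_ (+) _).
rewrite (eq_bigr (fun t => t == (Phi, w))).
  have hl : (Phi == l) = false by case: (l) lP.
  by rewrite sum_eq /= xpair_eqE /= hl andbT.
case=> a b /andP[tT ne]; have /= ha := Ho _ tT ne; rewrite /col /= ha xpair_eqE /= eq_sym.
by [].
Qed.

Lemma col_bad (V : finType) (H : graph V) l u w :
  looped_simple H -> l != Phi -> col H (l, u) u = false -> col H (l, u) w = adj H u w.
Proof.
move=> HS; rewrite /col /adj /=; case: l => //= _.
  case: (eqVneq w u) => [-> | ne]; first by move=> ->.
  by rewrite HS.
case: (eqVneq w u) => [-> | ne]; first by rewrite eqxx; case: (H u u).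
by rewrite HS addbF.
Qed.

Lemma zsum_nb (V : finType) (H : graph V) l u :
  looped_simple H -> l != Phi -> col H (l, u) u = false ->
  zsum H ((l, u) |: [set (Phi, z) | z in nbhd H u]).
Proof.
move=> HS lP bad w; rewrite (@sum_formula V H _ l u lP) //.
- rewrite in_setU1 xpair_eqE /= eq_sym (negbTE lP) /=.
  rewrite mem_imset; last by move=> a b [->].
  by rewrite in_set (col_bad w HS lP bad) addbb.
- by rewrite setU11.
- by move=> t; rewrite in_setU1 => /orP[-> //|/imsetP[z _ ->]].
Qed.

Lemma zsum_P (V : finType) (H H' : graph V) (m : elt V -> elt V) (c : V -> bool) (v : V) :
  injective m -> c v = false ->
  (forall x w, col H' (m x) w = col H x w (+) (c w && col H x v)) ->
  forall T, zsum H T <-> zsum H' (m @: T).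
Proof.
move=> mi cv Hc T.
have E : forall w, \big[addb/false]_(y in m @: T) col H' y w =
   \big[addb/false]_(x in T) col H x w (+) (c w && \big[addb/false]_(x in T) col H x v).
  move=> w; rewrite big_imset /=; last by move=> x y _ _; apply: mi.
  rewrite (eq_bigr _ (fun x _ => Hc x w)) big_split /=; congr (_ (+) _).
  by case: (c w) => //; rewrite big1.
rewrite /zsum; split=> Hz w.
  by rewrite E !Hz andbF.
have Hv := Hz v; rewrite E cv /= addbF in Hv.
by have := Hz w; rewrite E Hv andbF addbF.
Qed.

Lemma preim_facts (T : finType) (m : T -> T) (S D : {set T}) :
  injective m -> D \subset m @: S ->
  m @: (m @^-1: D) = D /\ m @^-1: D \subset S.
Proof.
move=> mi sub; split.
  apply/setP => y; apply/imsetP/idP => [[x]|yT]; first by rewrite inE => ? ->.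
  have /imsetP[x xS ey] := subsetP sub _ yT; exists x => //; by rewrite inE -ey.
apply/subsetP => x; rewrite inE => /(subsetP sub) /imsetP[y yS /mi ->] //.
Qed.

Lemma indep_transfer (V : finType) (H H' : graph V) (m : elt V -> elt V) :
  injective m -> (forall T, zsum H T <-> zsum H' (m @: T)) ->
  forall S, indep H S <-> indep H' (m @: S).
Proof.
move=> mi Hz S; rewrite /indep; split.
  move=> HI T' sub z'.
  have [eT sT] := preim_facts mi sub.
  have := HI _ sT; rewrite -eT in z'; move=> /(_ ((Hz _).2 z')) e0.
  by rewrite -eT e0 imset0.
move=> HI T sub z.
have /eqP := HI _ (imsetS m sub) ((Hz T).1 z).
by rewrite imset_eq0 => /eqP.
Qed.

Lemma circuit_transfer (V : finType) (H H' : graph V) (m : elt V -> elt V) :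
  injective m -> (forall T, zsum H T <-> zsum H' (m @: T)) ->
  forall S, circuit H S <-> circuit H' (m @: S).
Proof.
move=> mi Hz S; have It := indep_transfer mi Hz; rewrite /circuit; split=> -[ni pm]; split.
- by move=> /It.
- move=> D' pD'.
  have [eT sT] := preim_facts mi (proper_sub pD').
  rewrite -eT; apply/It; apply: pm.
  rewrite properEneq sT andbT; apply/eqP => e.
  by rewrite -eT e properE subxx in pD'.
- by move=> /It.
- move=> D pD; apply/It; apply: pm.
  by apply: imset_proper => // x y _ _; apply: mi.
Qed.

Lemma sub_transfer (V : finType) (m : elt V -> elt V) :
  injective m -> (forall x, (m x).2 = x.2) ->
  forall S, subtransversal S <-> subtransversal (m @: S).
Proof.
move=> mi m2 S; split.
  move=> HS _ _ /imsetP[x xS ->] /imsetP[y yS ->]; rewrite !m2 => e.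
  by rewrite (HS _ _ xS yS e).
move=> HS x y xS yS e; apply: mi; apply: HS; try exact: imset_f.
by rewrite !m2.
Qed.

Lemma col_ns (V : finType) (H : graph V) v x w : looped_simple H ->
  col (op_ns H v) (map_ns H v x) w = col H x w (+) (adj H v w && col H x v).
Proof.
move=> HS; case: x => l y; rewrite /map_ns /op_ns /col /adj /=.
case: (eqVneq y v) => [->|nyv] /=.
- case: (boolP (H v v)) => hv; case: l => /=; rewrite /swapl /=;
  case: (eqVneq w v) => [->|nwv] /=; rewrite ?eqxx ?hv ?(HS v w) /=;
  try (by case: (H w v)); by move: hv => /negbTE ->.
- have nvy : (v == y) = false by rewrite eq_sym (negbTE nyv).
  case: l => /=; rewrite ?nvy /= ?andbF ?addbF //;
  by case: (v != w); case: (H v w); case: (H v y); case: (H w y); case: (w == y).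
Qed.

Lemma col_s (V : finType) (H : graph V) v x w : looped_simple H ->
  col (op_s H v) (map_s H v x) w = col H x w (+) (adj H v w && col H x v).
Proof.
move=> HS; case: x => l y; rewrite /map_s /map_ns /op_s /col /adj /nbhd /=.
case: (eqVneq y v) => [->|nyv] /=.
- case: (boolP (H v v)) => hv; case: l => /=; rewrite /swapl /=;
  case: (eqVneq w v) => [->|nwv] /=; rewrite ?eqxx ?hv ?(HS v w) /= ?andbF /=;
  try (by case: (H w v)); by move: hv => /negbTE ->.
- have nvy : (v == y) = false by rewrite eq_sym (negbTE nyv).
  rewrite inE /adj nvy /=.
  case hvy: (H v y); case: l => /=; rewrite /swapl /= ?nvy /= ?andbF ?addbF ?andbT //;
  case: (eqVneq w y) => [->|nwy] /=; rewrite ?nvy ?hvy ?eqxx /= ?andbF ?andbT ?addbT ?addbF //;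
  by case: (v != w); case: (H v w); case: (H w y); case: (H y y).
Qed.

Lemma col_loop (V : finType) (H : graph V) v x w :
  col (op_loop H v) (map_loop H v x) w = col H x w (+) (false && col H x v).
Proof.
case: x => l y; rewrite /map_loop /op_loop /col /= addbF.
case: (eqVneq y v) => [->|nyv] /=.
- case: l => /=; rewrite /swapl /=; case: (eqVneq w v) => [e|nwv] /=; rewrite ?e ?eqxx //=;
  by case: (H v v); case: (H w v).
- have nyv' : (y == v) = false by apply/negbTE.
  by case: l => //=; rewrite nyv' andbF.
Qed.

Lemma ls_loop (V : finType) (H : graph V) v : looped_simple H -> looped_simple (op_loop H v).
Proof. by move=> HS x y; rewrite /op_loop [(y == v) && _]andbC (HS x y). Qed.

Lemma ls_ns (V : finType) (H : graph V) v : looped_simple H -> looped_simple (op_ns H v).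
Proof. by move=> HS x y; rewrite /op_ns [adj H v y && _]andbC (HS x y). Qed.

Lemma ls_s (V : finType) (H : graph V) v : looped_simple H -> looped_simple (op_s H v).
Proof. by move=> HS x y; rewrite /op_s [y == x]eq_sym [adj H v y && _]andbC (HS x y). Qed.

Lemma swaplK a b : a != b -> involutive (swapl a b).
Proof.
by case: a b => [] [] // _ [].
Qed.

Lemma inj_loop (V : finType) (H : graph V) v : injective (map_loop H v).
Proof.
apply: (can_inj (g := map_loop H v)) => -[l y]; rewrite /map_loop /=.
case: (eqVneq y v) => [->|n] /=; rewrite ?eqxx ?(negbTE n) //.
by rewrite swaplK.
Qed.

Lemma inj_ns (V : finType) (H : graph V) v : injective (map_ns H v).
Proof.
apply: (can_inj (g := map_ns H v)) => -[l y]; rewrite /map_ns /=.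
case: (eqVneq y v) => [->|n] /=; rewrite ?eqxx ?(negbTE n) //.
by case: (H v v) => /=; rewrite eqxx swaplK.
Qed.

Lemma inj_s (V : finType) (H : graph V) v : injective (map_s H v).
Proof.
apply: (can_inj (g := map_s H v)) => -[l y]; rewrite /map_s /map_ns /=.
case: (eqVneq y v) => [->|n] /=; rewrite ?eqxx ?(negbTE n) //.
  by case: (H v v) => /=; rewrite eqxx swaplK.
by case: (boolP (y \in nbhd H v)) => hy /=; rewrite ?(negbTE n) ?hy ?(negbTE hy) ?swaplK.
Qed.

Lemma snd_loop (V : finType) (H : graph V) v x : (map_loop H v x).2 = x.2.
Proof. by rewrite /map_loop; case: ifP. Qed.
Lemma snd_ns (V : finType) (H : graph V) v x : (map_ns H v x).2 = x.2.
Proof. by rewrite /map_ns; case: ifP => //; case: ifP. Qed.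
Lemma snd_s (V : finType) (H : graph V) v x : (map_s H v x).2 = x.2.
Proof. by rewrite /map_s; case: ifP => [_|_]; [apply: snd_ns | case: ifP]. Qed.

Lemma adjvv (V : finType) (H : graph V) v : adj H v v = false.
Proof. by rewrite /adj eqxx. Qed.

Lemma ii_props (V : finType) (G H : graph V) b : looped_simple G -> induced_iso G H b ->
  [/\ looped_simple H, injective b, (forall x, (b x).2 = x.2) &
      (forall T, zsum G T <-> zsum H (b @: T))].
Proof.
move=> HG; elim=> {H b} [|H b v _ [HS bi b2 bz]|H b v _ [HS bi b2 bz]|H b v _ [HS bi b2 bz]].
- split; [exact: HG | exact: inj_id | by [] | by move=> T; rewrite imset_id].
- split; [exact: ls_loop | exact: inj_comp (@inj_loop _ H v) bi |
         by move=> x; rewrite /= snd_loop b2 |].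
  move=> T; rewrite imset_comp; split=> [/bz|/(zsum_P (@inj_loop _ H v) (erefl false) (@col_loop _ H v))/bz //].
  by move/(zsum_P (@inj_loop _ H v) (erefl false) (@col_loop _ H v)).
- split; [exact: ls_s | exact: inj_comp (@inj_s _ H v) bi |
         by move=> x; rewrite /= snd_s b2 |].
  have Z := zsum_P (@inj_s _ H v) (adjvv H v) (fun x w => @col_s _ H v x w HS).
  by move=> T; rewrite imset_comp; split=> [/bz/Z|/Z/bz].
- split; [exact: ls_ns | exact: inj_comp (@inj_ns _ H v) bi |
         by move=> x; rewrite /= snd_ns b2 |].
  have Z := zsum_P (@inj_ns _ H v) (adjvv H v) (fun x w => @col_ns _ H v x w HS).
  by move=> T; rewrite imset_comp; split=> [/bz/Z|/Z/bz].
Qed.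

Lemma ii_trans (V : finType) (G H1 H2 : graph V) b1 b2 :
  induced_iso G H1 b1 -> induced_iso H1 H2 b2 -> induced_iso G H2 (b2 \o b1).
Proof.
move=> I1; elim=> {H2 b2} [|H b v _ IH|H b v _ IH|H b v _ IH].
- exact: I1.
- exact: (ii_loop v IH).
- exact: (ii_s v IH).
- exact: (ii_ns v IH).
Qed.

Lemma tc_transfer (V : finType) (G H : graph V) b : looped_simple G -> induced_iso G H b ->
  forall S, (subtransversal S <-> subtransversal (b @: S)) /\ (circuit G S <-> circuit H (b @: S)).
Proof.
move=> HG Ii S; have [_ bi b2 bz] := ii_props HG Ii; split.
  exact: sub_transfer.
exact: circuit_transfer.
Qed.

Lemma adj_sym (V : finType) (H : graph V) a c : looped_simple H -> adj H a c = adj H c a.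
Proof. by move=> HS; rewrite /adj eq_sym HS. Qed.

Lemma zeta_circuit (V : finType) (H : graph V) v : looped_simple H -> circuit H (zeta H v).
Proof.
move=> HS; set x0 := (if H v v then Psi else Chi, v).
have x0P : x0.1 != Phi by rewrite /x0; case: (H v v).
have x0b : col H x0 v = false by rewrite /x0 /col /=; case: (H v v); rewrite ?eqxx.
have ez : zeta H v = x0 |: [set (Phi, z) | z in nbhd H v] by rewrite /zeta /x0; case: (H v v).
have oth : forall t, t \in zeta H v -> t != x0 -> t.1 = Phi.
  move=> t; rewrite ez in_setU1 => /orP[/eqP -> | /imsetP[z _ ->]] //.
  by rewrite eqxx.
have Zz : zsum H (zeta H v).
  by rewrite ez; apply: (@zsum_nb V H x0.1 v HS x0P x0b).
split.
  move=> I; have := I _ (subxx _) Zz => /setP /(_ x0).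
  by rewrite ez setU11 inE.
move=> D pD T sT zT.
have sTz : T \subset zeta H v := subset_trans sT (proper_sub pD).
case: (boolP (x0 \in T)) => x0T.
  have : zeta H v \subset T.
    apply/subsetP => y; rewrite ez in_setU1 => /orP[/eqP -> // | /imsetP[z zN ->]].
    have := zT z; rewrite (@sum_formula V H T x0.1 v x0P x0T).
      rewrite (@col_bad V H x0.1 v z HS x0P x0b).
      by rewrite inE in zN; rewrite zN; case: ((Phi, z) \in T).
    by move=> t tT; apply: oth; apply: (subsetP sTz).
  move=> szT; have szD := subset_trans szT sT.
  by rewrite properE szD andbF in pD.
apply: (phi_free (H := H)) => // t tT; apply: oth; first exact: (subsetP sTz).
by apply/eqP => e; rewrite -e tT in x0T.
Qed.

Definition np (V : finType) (S : {set elt V}) := #|[set x in S | x.1 != Phi]|.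

Lemma map_good (V : finType) (H : graph V) l u :
  l != Phi -> col H (l, u) u -> map_ns H u (l, u) = (Phi, u).
Proof. by rewrite /map_ns /col /= eqxx; case: l => //= _; case: (H u u). Qed.

Lemma map_bad (V : finType) (H : graph V) l u :
  l != Phi -> col H (l, u) u = false -> map_ns H u (l, u) = (l, u).
Proof. by rewrite /map_ns /col /= eqxx; case: l => //= _; case: (H u u). Qed.

Lemma map_fix (V : finType) (H : graph V) u y : y.2 != u -> map_ns H u y = y.
Proof. by rewrite /map_ns => /negbTE ->. Qed.

Lemma good_step (V : finType) (H : graph V) (S : {set elt V}) l u :
  looped_simple H -> subtransversal S -> circuit H S -> (l, u) \in S -> l != Phi ->
  col H (l, u) u ->
  exists b, [/\ induced_iso H (op_ns H u) b, subtransversal (b @: S),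
     circuit (op_ns H u) (b @: S) & np (b @: S) < np S].
Proof.
move=> HS sS cS xS lP good.
have Ii : induced_iso H (op_ns H u) (map_ns H u \o id) := ii_ns u (ii_refl H).
have [T1 T2] := tc_transfer HS Ii S.
exists (map_ns H u \o id); split => //; [exact/T1 | exact/T2 |].
apply: proper_card; apply/properP; split.
  apply/subsetP => z; rewrite !inE => /andP[/imsetP[y yS ->] /=].
  case: (eqVneq y (l, u)) => [->|ne]; first by rewrite map_good.
  have y2 : y.2 != u.
    by case: (eqVneq y.2 u) => // e; rewrite (sS _ _ yS xS e) eqxx in ne.
  by rewrite map_fix // yS.
exists (l, u); first by rewrite inE xS.
rewrite inE negb_and; apply/orP; left; apply/imsetP => -[y yS /= e].
case: (eqVneq y (l, u)) => [ey|ne].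
  by move: e; rewrite ey map_good // => -[] e; rewrite e eqxx in lP.
have y2 : y.2 != u by case: (eqVneq y.2 u) => // e2; rewrite (sS _ _ yS xS e2) eqxx in ne.
by move: e; rewrite map_fix // => ey; rewrite -ey eqxx in ne.
Qed.

Lemma main_lemma (V : finType) n : forall (H : graph V) (S : {set elt V}),
  looped_simple H -> subtransversal S -> circuit H S -> np S <= n ->
  exists H2 b v, induced_iso H H2 b /\ b @: S = zeta H2 v.
Proof.
elim: n => [|n IH] H S HS sS cS hn.
all: have [x xS xnp] : exists2 x, x \in S & x.1 != Phi.
all: try (case: (boolP [exists x in S, x.1 != Phi]) => [/existsP[x /andP[? ?]]|/existsPn hall];
      [by exists x | exfalso; apply: cS.1 => T sT; apply: phi_free => t tT;
       by have := hall t; rewrite (subsetP sT _ tT) /= => /negbNE /eqP]).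
  have : 0 < np S by apply/card_gt0P; exists x; rewrite inE xS.
  by rewrite lt0n -leqn0 hn.
have cont : forall H1 b1, looped_simple H1 -> induced_iso H H1 b1 ->
    subtransversal (b1 @: S) -> circuit H1 (b1 @: S) -> np (b1 @: S) < np S ->
    exists H2 b v, induced_iso H H2 b /\ b @: S = zeta H2 v.
  move=> H1 b1 HS1 I1 s1 c1 lt1.
  have [H2 [b2 [v [I2 e2]]]] := IH H1 _ HS1 s1 c1 (leq_trans lt1 hn).
  exists H2, (b2 \o b1), v; split; first exact: ii_trans I1 I2.
  by rewrite imset_comp.
case: x xS xnp => l u xS lP.
case: (boolP (col H (l, u) u)) => good.
  have [b1 [I1 s1 c1 lt1]] := good_step HS sS cS xS lP good.
  exact: (cont _ _ (ls_ns u HS) I1 s1 c1 lt1).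
case: (boolP [exists y in S, (y.1 != Phi) && col H y y.2]) => [/existsP[[l' u'] /and3P[y'S l'P g']]|/existsPn nog].
  have [b1 [I1 s1 c1 lt1]] := good_step HS sS cS y'S l'P g'.
  exact: (cont _ _ (ls_ns u' HS) I1 s1 c1 lt1).
have bad : forall y, y \in S -> y.1 != Phi -> col H y y.2 = false.
  by move=> y yS yP; have := nog y; rewrite yS yP /= => /negbTE.
move/negbTE: good => good.
case: (boolP [exists w, (w \in nbhd H u) && ((Phi, w) \notin S)]) => [/existsP[w /andP[wN wS]]|/existsPn allin].
  have Ii : induced_iso H (op_ns H w) (map_ns H w \o id) := ii_ns w (ii_refl H).
  have eS : (map_ns H w \o id) @: S = S.
    rewrite -[RHS]imset_id; apply: eq_in_imset => y yS /=.
    case: (eqVneq y.2 w) => [e|ne]; last exact: map_fix.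
    case: y yS e => l1 u1 yS /= e; rewrite e in yS *.
    have l1P : l1 != Phi by apply: contraNneq wS => e1; rewrite -e1.
    by rewrite (map_bad (H:=H) l1P (bad _ yS l1P)).
  have [T1 T2] := tc_transfer HS Ii S; rewrite eS in T1 T2.
  have HS1 := ls_ns w HS.
  have wu : adj H w u by move: wN; rewrite inE adj_sym.
  have g1 : col (op_ns H w) (l, u) u.
    move: good; rewrite /col /op_ns /= wu /=.
    by case: (l) lP => //= _; rewrite ?eqxx; case: (H u u).
  have [b1 [I1 s1 c1 lt1]] := good_step HS1 (T1.1 sS) (T2.1 cS) xS lP g1.
  apply: (cont _ (b1 \o (map_ns H w \o id)) (ls_ns u HS1) (ii_trans Ii I1)).
  - by rewrite imset_comp eS.
  - by rewrite imset_comp eS.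
  - by rewrite imset_comp eS.
(* all phi-neighbours in S: S is the neighbourhood circuit *)
set D := (l, u) |: [set (Phi, z) | z in nbhd H u].
have DS : D \subset S.
  apply/subsetP => y; rewrite in_setU1 => /orP[/eqP -> // | /imsetP[z zN ->]].
  by have := allin z; rewrite zN /= negbK.
have zD : zsum H D by apply: zsum_nb.
have eD : D = S.
  case: (eqVneq D S) => // ne; exfalso.
  have pD : D \proper S by rewrite properEneq ne DS.
  have := cS.2 D pD D (subxx _) zD => /setP /(_ (l, u)).
  by rewrite setU11 inE.
exists H, id, u; split; first exact: ii_refl.
rewrite imset_id -eD /D /zeta.
move: lP good; rewrite /col /=; case: (l) => //= _; [by move=> -> | by case: (H u u); rewrite ?eqxx].
Qed.

Theorem theorem1p2 (V : finType) (G : graph V) (S : {set elt V}) :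
  looped_simple G -> subtransversal S ->
  (transverse_circuit G S <->
   exists (H : graph V) (beta : elt V -> elt V),
     [/\ looped_simple H, induced_iso G H beta &
         exists v : V, beta @: S = zeta H v]).
Proof.
move=> HG sS; split.
  move=> [_ cS].
  have [H [b [v [Ii e]]]] := @main_lemma V (np S) G S HG sS cS (leqnn _).
  have [HS _ _ _] := ii_props HG Ii.
  by exists H, b; split => //; exists v.
move=> [H [b [HS Ii [v e]]]]; split => //.
have [_ C] := tc_transfer HG Ii S.
by apply/C; rewrite e; apply: zeta_circuit.
Qed.
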